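(* Let $\alpha,\beta,p,q\in\mathbb{C}$ be constants with $p^2\neq q^2$, and set $s^2=\alpha^2-p^2$, $\mu^2=\alpha^2-q^2$, $t^2=\beta^2-p^2$, $\nu^2=\beta^2-q^2$. Let $h,g:\mathbb{Z}^2\to\mathbb{C}$ satisfy $\widehat{h}-\widetilde{h}=\widetilde{\widetilde{g}}-g$ and $(h+\widetilde g)g=\beta^2-\alpha^2$. Let $\varphi$ solve $$\widetilde{\widetilde{\varphi}}+h\,\widetilde{\varphi}+\alpha^2\varphi=p^2\varphi,\qquad \widehat{\varphi}=\widetilde{\varphi}-g\,\varphi,$$ and $\phi$ solve $$\widetilde{\widetilde{\phi}}+h\,\widetilde{\phi}+\alpha^2\phi=q^2\phi,\qquad \widehat{\phi}=\widetilde{\phi}-g\,\phi .$$ Then $y=\varphi\widetilde{\phi}-\phi\widetilde{\varphi}$ solves the leKdV-II equation $$s^2\mu^2\,y\widehat{y}+\widetilde{y}\,\widehat{\widetilde{y}}-t^2\nu^2\,y\widetilde{y}-\widehat{y}\,\widehat{\widetilde{y}}-(\alpha^2-\beta^2)\big(y\,\widehat{\widetilde{y}}+\widetilde{y}\,\widehat{y}\big)=0 .$$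
   Context: Shift notation: for a function $f$ on $\mathbb{Z}^2$ (variables $n,m$), $\widetilde f(n,m)=f(n+1,m)$, $\widehat f(n,m)=f(n,m+1)$, and combined accents denote composed shifts. *)

(* Defs.v *)
From HB Require Import structures.
From mathcomp Require Import all_boot all_order all_algebra.
From mathcomp Require Import complex.
From mathcomp Require Import Rstruct.
From Stdlib Require Import Rdefinitions.
Set Implicit Arguments. Unset Strict Implicit. Unset Printing Implicit Defensive.
Import Order.TTheory GRing.Theory Num.Theory.
Local Open Scope ring_scope.

(* Shifts on functions Z^2 -> C: tilde shifts n, hat shifts m. *)
Definition tl {T : Type} (f : int -> int -> T) : int -> int -> T :=
  fun n m => f (n + 1) m.
Definition ht {T : Type} (f : int -> int -> T) : int -> int -> T :=
  fun n m => f n (m + 1).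

(* Main.v *)
Require Import Defs.
From HB Require Import structures.
From mathcomp Require Import all_boot all_order all_algebra.
From mathcomp Require Import complex.
From mathcomp Require Import Rstruct.
From Stdlib Require Import Rdefinitions.
From mathcomp Require Import ring.
Import Order.TTheory GRing.Theory Num.Theory.
Local Open Scope ring_scope.

Lemma key (R : comNzRingType) (a0 a1 b0 b1 h hh g gt al p q : R) :
  let s2 := al - p in let mu2 := al - q in
  let be := al + (h + gt) * g in
  let t2 := be - p in let nu2 := be - q in
  let a2 := p * a0 - al * a0 - h * a1 in
  let b2 := q * b0 - al * b0 - h * b1 in
  let ah0 := a1 - g * a0 in let bh0 := b1 - g * b0 in
  let ah1 := a2 - gt * a1 in let bh1 := b2 - gt * b1 in
  let ah2 := p * ah0 - al * ah0 - hh * ah1 in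
  let bh2 := q * bh0 - al * bh0 - hh * bh1 in
  let y := a0 * b1 - b0 * a1 in
  let yt := a1 * b2 - b1 * a2 in
  let yh := ah0 * bh1 - bh0 * ah1 in
  let yht := ah1 * bh2 - bh1 * ah2 in
  s2 * mu2 * y * yh + yt * yht - t2 * nu2 * y * yt - yh * yht
  - (al - be) * (y * yht + yt * yh) = 0.
Proof. move=> /=. ring. Qed.

Theorem proposition4p1
  (alpha beta p q : (Rdefinitions.R)[i])
  (hpq : p ^+ 2 != q ^+ 2)
  (h g varphi phi : int -> int -> (Rdefinitions.R)[i])
  (Hhg1 : forall n m, ht h n m - tl h n m = tl (tl g) n m - g n m)
  (Hhg2 : forall n m, (h n m + tl g n m) * g n m = beta ^+ 2 - alpha ^+ 2)
  (Hvp1 : forall n m, tl (tl varphi) n m + h n m * tl varphi n m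
                        + alpha ^+ 2 * varphi n m = p ^+ 2 * varphi n m)
  (Hvp2 : forall n m, ht varphi n m = tl varphi n m - g n m * varphi n m)
  (Hph1 : forall n m, tl (tl phi) n m + h n m * tl phi n m
                        + alpha ^+ 2 * phi n m = q ^+ 2 * phi n m)
  (Hph2 : forall n m, ht phi n m = tl phi n m - g n m * phi n m) :
  let s2 := alpha ^+ 2 - p ^+ 2 in
  let mu2 := alpha ^+ 2 - q ^+ 2 in
  let t2 := beta ^+ 2 - p ^+ 2 in
  let nu2 := beta ^+ 2 - q ^+ 2 in
  let y := fun n m => varphi n m * tl phi n m - phi n m * tl varphi n m in
  forall n m,
    s2 * mu2 * y n m * ht y n m + tl y n m * ht (tl y) n m
    - t2 * nu2 * y n m * tl y n m - ht y n m * ht (tl y) n m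
    - (alpha ^+ 2 - beta ^+ 2) * (y n m * ht (tl y) n m + tl y n m * ht y n m)
    = 0.
Proof.
move=> s2 mu2 t2 nu2 y n m.
rewrite /s2 /mu2 /t2 /nu2 /y /tl /ht.
have B : beta ^+ 2 = alpha ^+ 2 + (h n m + g (n + 1) m) * g n m.
  by rewrite Hhg2; ring.
have V1 : forall f (r : (Rdefinitions.R)[i]) k,
  (forall n m, tl (tl f) n m + h n m * tl f n m + alpha ^+ 2 * f n m = r * f n m) ->
  f (k + 1 + 1) m = r * f k m - alpha ^+ 2 * f k m - h k m * f (k + 1) m.
  by move=> f r k E; rewrite -(E k m) /tl; ring.
have V1' : forall f (r : (Rdefinitions.R)[i]) k,
  (forall n m, tl (tl f) n m + h n m * tl f n m + alpha ^+ 2 * f n m = r * f n m) ->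
  f (k + 1 + 1) (m + 1) = r * f k (m + 1) - alpha ^+ 2 * f k (m + 1) - h k (m + 1) * f (k + 1) (m + 1).
  by move=> f r k E; rewrite -(E k (m + 1)) /tl; ring.
have V2 : forall f k,
  (forall n m, ht f n m = tl f n m - g n m * f n m) ->
  f k (m + 1) = f (k + 1) m - g k m * f k m.
  by move=> f k E; rewrite -(E k m).
rewrite (V1' _ _ n Hvp1) (V1' _ _ n Hph1).
rewrite (V2 _ (n + 1) Hvp2) (V2 _ (n + 1) Hph2) (V2 _ n Hvp2) (V2 _ n Hph2).
rewrite !(V1 _ _ n Hvp1) !(V1 _ _ n Hph1) B.
exact: (@key _ (varphi n m) (varphi (n+1) m) (phi n m) (phi (n+1) m) (h n m) (h n (m+1)) (g n m) (g (n+1) m) (alpha ^+ 2) (p ^+ 2) (q ^+ 2)).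
Qed.
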